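(* Let $\mathcal{S}_1$ be the set of integer strings obtainable from $[4]$ by iterating the operations $$[c_1,\dots,c_k]\mapsto[c_1+1,\dots,c_k,2]\quad\text{or}\quad[c_1,\dots,c_k]\mapsto[2,c_1,\dots,c_k+1].$$ Let $\mathcal{S}_2$ be the set of strings obtainable from $[4]=[2+2]$ by iterating the operations $$[a_1,\dots,a_{k-1},a_k+b_l,b_{l-1},\dots,b_1]\mapsto[a_1,\dots,a_{k-1},(a_k+1)+2,b_l,b_{l-1},\dots,b_1]$$ or $$[a_1,\dots,a_{k-1},a_k+b_l,b_{l-1},\dots,b_1]\mapsto[a_1,\dots,a_{k-1},a_k,2+(b_l+1),b_{l-1},\dots,b_1].$$ Then $\mathcal{S}_1=\mathcal{S}_2$, and this set equals the set of Hirzebruch–Jung continued fraction expansions (with all entries $\ge2$) of the rationals $$\left\{\frac{p^2}{pq-1}\,:\,p>q>0,\ \gcd(p,q)=1\right\}.$$ Similarly, the set of Hirzebruch–Jung continued fraction expansions of $$\left\{\frac{p^2}{pq+1}\,:\,p>q>0,\ \gcd(p,q)=1\right\}$$ is obtained from $[2,2,2]$ in either of two ways. The first is by iterating $$[c_1,\dots,c_k]\mapsto[c_1+1,\dots,c_k,2]\quad\text{or}\quad[2,c_1,\dots,c_k+1].$$ The second is by iterating $$[a_1,\dots,a_{k-1},a_k,2,b_l,b_{l-1},\dots,b_1]\mapsto[a_1,\dots,a_{k-1},(a_k+1),2,2,b_l,b_{l-1},\dots,b_1]$$ or $$[a_1,\dots,a_{k-1},a_k,2,b_l,b_{l-1}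,\dots,b_1]\mapsto[a_1,\dots,a_{k-1},a_k,2,2,(b_l+1),b_{l-1},\dots,b_1].$$
   Context: Hirzebruch–Jung continued fractions: $[c_1,\dots,c_n]:=c_1-\cfrac{1}{c_2-\cfrac{1}{\ddots-\cfrac{1}{c_n}}}$, with all $c_i\ge2$ (the expansion of a rational $>1$ is then unique). In the rules for $\mathcal{S}_2$, a string is written as $[a_1,\dots,a_{k-1},a_k+b_l,b_{l-1},\dots,b_1]$. Here $p/q=[a_1,\dots,a_k]$ and $p/(p-q)=[b_1,\dots,b_l]$ for the corresponding coprime pair $p>q$, so that a distinguished middle entry equals $a_k+b_l$. The rules act on this decomposition, keeping track of $a_k$ and $b_l$ separately. The same applies to the decomposition $[a_1,\dots,a_k,2,b_l,\dots,b_1]$ in the second part. *)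

(* Defs.v *)
From mathcomp Require Import all_boot all_order all_algebra.
Set Implicit Arguments. Unset Strict Implicit. Unset Printing Implicit Defensive.
Import Order.TTheory GRing.Theory Num.Theory.

(* Hirzebruch-Jung continued fraction [c1,...,cn] = c1 - 1/(c2 - 1/(... - 1/cn)),
   evaluated in rat.  The empty string (never used) is sent to 0. *)
Fixpoint hj (s : seq nat) : rat :=
  match s with
  | [::] => 0
  | c :: t => if t is [::] then (c%:R)%R else (c%:R - (hj t)^-1)%R
  end.

Definition hj_string (s : seq nat) : bool := (s != [::]) && all (fun c => 2 <= c) s.

Definition incr_head (s : seq nat) : seq nat :=
  if s is x :: t then x.+1 :: t else [::].
Definition incr_last (s : seq nat) : seq nat := rev (incr_head (rev s)).

Definition opL (s : seq nat) : seq nat := rcons (incr_head s) 2.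
Definition opR (s : seq nat) : seq nat := 2 :: incr_last s.

Inductive gen1 (s0 : seq nat) : seq nat -> Prop :=
| gen1_start : gen1 s0 s0
| gen1_L s : gen1 s0 s -> gen1 s0 (opL s)
| gen1_R s : gen1 s0 s -> gen1 s0 (opR s).

(* Decomposition states (a, b) with a = [a_1..a_k], b = [b_1..b_l].
   Moves: (a,b) |-> (a with a_k+1, b ++ [2])  and  (a,b) |-> (a ++ [2], b with b_l+1). *)
Inductive genAB : seq nat -> seq nat -> Prop :=
| genAB_start : genAB [:: 2] [:: 2]
| genAB_1 a b : genAB a b -> genAB (incr_last a) (rcons b 2)
| genAB_2 a b : genAB a b -> genAB (rcons a 2) (incr_last b).

(* [a_1,...,a_{k-1}, a_k + b_l, b_{l-1},...,b_1] *)
Definition str_mid (a b : seq nat) : seq nat :=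
  take (size a).-1 a ++ (last 0 a + last 0 b) :: rev (take (size b).-1 b).

Definition str_two (a b : seq nat) : seq nat := a ++ 2 :: rev b.

Definition S1 (s : seq nat) : Prop := gen1 [:: 4] s.
Definition S2 (s : seq nat) : Prop := exists a b, genAB a b /\ s = str_mid a b.
Definition T1 (s : seq nat) : Prop := gen1 [:: 2; 2; 2] s.
Definition T2 (s : seq nat) : Prop := exists a b, genAB a b /\ s = str_two a b.

Definition HJminus (s : seq nat) : Prop :=
  hj_string s /\ exists p q : nat, [/\ 0 < q, q < p, coprime p q &
     hj s = ((p ^ 2)%:R / ((p * q)%:R - 1))%R].
Definition HJplus (s : seq nat) : Prop :=
  hj_string s /\ exists p q : nat, [/\ 0 < q, q < p, coprime p q &
     hj s = ((p ^ 2)%:R / ((p * q)%:R + 1))%R].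

(* Main.v *)
Require Import Defs.
From mathcomp Require Import all_boot all_order all_algebra.
From mathcomp Require Import ring lra zify.
Set Implicit Arguments. Unset Strict Implicit. Unset Printing Implicit Defensive.
Import Order.TTheory GRing.Theory Num.Theory.

Inductive genH : seq nat -> seq nat -> Prop :=
| genH_start : genH [:: 2] [:: 2]
| genH_1 a b : genH a b -> genH (incr_head a) (2 :: b)
| genH_2 a b : genH a b -> genH (2 :: a) (incr_head b).

Lemma incr_last_rcons s x : incr_last (rcons s x) = rcons s x.+1.
Proof. by rewrite /incr_last rev_rcons /= rev_cons revK. Qed.

Lemma rcons_nilF (s : seq nat) (x : nat) : (rcons s x == [::]) = false.
Proof. by case: s. Qed.
Lemma incr_head_nil (s : seq nat) : (incr_head s == [::]) = (s == [::]).
Proof. by case: s. Qed.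
Lemma incr_last_nil (s : seq nat) : (incr_last s == [::]) = (s == [::]).
Proof. by case/lastP: s => // s x; rewrite incr_last_rcons !rcons_nilF. Qed.

Lemma incr_head_last a : incr_head (incr_last a) = incr_last (incr_head a).
Proof.
case/lastP: a => [|a x] //; rewrite incr_last_rcons.
case: a => [|y a] //=. by rewrite -!rcons_cons incr_last_rcons.
Qed.

Lemma incr_head_rcons a x : a != [::] -> incr_head (rcons a x) = rcons (incr_head a) x.
Proof. by case: a. Qed.
Lemma incr_last_cons x b : b != [::] -> incr_last (x :: b) = x :: incr_last b.
Proof. by case/lastP: b => // b y _; rewrite -rcons_cons !incr_last_rcons. Qed.

Lemma genAB_ne a b : genAB a b -> a != [::] /\ b != [::].
Proof.
elim=> // {}a {}b _ [Ha Hb]; rewrite ?incr_last_nil ?rcons_nilF //.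
Qed.
Lemma genH_ne a b : genH a b -> a != [::] /\ b != [::].
Proof.
elim=> // {}a {}b _ [Ha Hb]; rewrite ?incr_head_nil //.
Qed.

Lemma genAB_H1 a b : genAB a b -> genAB (incr_head a) (2 :: b).
Proof.
elim=> [|{}a {}b H IH|{}a {}b H IH].
- exact: (genAB_1 genAB_start).
- rewrite incr_head_last -rcons_cons. exact: genAB_1.
- have [Ha Hb] := genAB_ne H.
  rewrite incr_head_rcons // -(incr_last_cons 2 Hb). exact: genAB_2.
Qed.

Lemma genAB_H2 a b : genAB a b -> genAB (2 :: a) (incr_head b).
Proof.
elim=> [|{}a {}b H IH|{}a {}b H IH].
- exact: (genAB_2 genAB_start).
- have [Ha Hb] := genAB_ne H.
  rewrite incr_head_rcons // -(incr_last_cons 2 Ha). exact: genAB_1.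
- rewrite incr_head_last -rcons_cons. exact: genAB_2.
Qed.

Lemma genH_L1 a b : genH a b -> genH (incr_last a) (rcons b 2).
Proof.
elim=> [|{}a {}b H IH|{}a {}b H IH].
- exact: (genH_1 genH_start).
- rewrite -incr_head_last rcons_cons. exact: genH_1.
- have [Ha Hb] := genH_ne H.
  rewrite (incr_last_cons 2 Ha) -incr_head_rcons //. exact: genH_2.
Qed.

Lemma genH_L2 a b : genH a b -> genH (rcons a 2) (incr_last b).
Proof.
elim=> [|{}a {}b H IH|{}a {}b H IH].
- exact: (genH_2 genH_start).
- have [Ha Hb] := genH_ne H.
  rewrite (incr_last_cons 2 Hb) -incr_head_rcons //. exact: genH_1.
- rewrite -incr_head_last rcons_cons. exact: genH_2.
Qed.

Lemma genAB_H a b : genAB a b <-> genH a b.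
Proof.
split; elim=> *; by [constructor | apply: genAB_H1 | apply: genAB_H2
  | apply: genH_L1 | apply: genH_L2].
Qed.

Lemma str_mid_rcons a x b y : str_mid (rcons a x) (rcons b y) = a ++ (x + y) :: rev b.
Proof.
by rewrite /str_mid !size_rcons /= -!cats1 !take_size_cat // !last_cat.
Qed.

Lemma opL_mid a b : a != [::] -> b != [::] ->
  opL (str_mid a b) = str_mid (incr_head a) (2 :: b).
Proof.
case/lastP: a => // a x _; case/lastP: b => // b y _.
rewrite -rcons_cons str_mid_rcons.
case: a => [|z a] /=.
  by rewrite /opL /= -[[:: x.+1]]/(rcons [::] x.+1) -[2 :: rcons b y]rcons_cons str_mid_rcons rev_cons.
by rewrite -[z.+1 :: rcons a x]rcons_cons -[2 :: rcons b y]rcons_cons str_mid_rcons /opL /= rcons_cat rev_cons.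
Qed.

Lemma opR_mid a b : a != [::] -> b != [::] ->
  opR (str_mid a b) = str_mid (2 :: a) (incr_head b).
Proof.
case/lastP: a => // a x _; case/lastP: b => // b y _.
rewrite -rcons_cons str_mid_rcons.
case: b => [|z b] /=.
  rewrite -[2 :: rcons a x]rcons_cons -[[:: y.+1]]/(rcons [::] y.+1) str_mid_rcons /opR /=.
  by rewrite !cats1 incr_last_rcons addnS.
rewrite -[2 :: rcons a x]rcons_cons -[z.+1 :: rcons b y]rcons_cons str_mid_rcons /opR !rev_cons.
have E : a ++ (x+y) :: rcons (rev b) z = rcons (a ++ (x+y) :: rev b) z by rewrite rcons_cat.
by rewrite E incr_last_rcons rcons_cat.
Qed.

Lemma opL_two a b : a != [::] -> opL (str_two a b) = str_two (incr_head a) (2 :: b).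
Proof. by case: a => // z a _; rewrite /opL /str_two /= rcons_cat rev_cons. Qed.

Lemma opR_two a b : b != [::] -> opR (str_two a b) = str_two (2 :: a) (incr_head b).
Proof.
case: b => // z b _; rewrite /opR /str_two /= rev_cons -rcons_cons -rcons_cat.
rewrite /opR /str_two /= rev_cons.
by rewrite incr_last_rcons rcons_cat.
Qed.
Lemma S1_S2 s : S1 s <-> S2 s.
Proof.
split.
- elim=> [|{}s _ [a [b [H ->]]]|{}s _ [a [b [H ->]]]].
  + by exists [:: 2], [:: 2]; split=> //; constructor.
  + have [Ha Hb] := genAB_ne H.
    exists (incr_head a), (2 :: b); split; [exact: genAB_H1 | exact: opL_mid].
  + have [Ha Hb] := genAB_ne H.
    exists (2 :: a), (incr_head b); split; [exact: genAB_H2 | exact: opR_mid].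
- case=> a [b [/genAB_H H ->]]; elim: H => [|{}a {}b H IH|{}a {}b H IH].
  + exact: gen1_start.
  + have [Ha Hb] := genH_ne H. rewrite -opL_mid //. exact: gen1_L.
  + have [Ha Hb] := genH_ne H. rewrite -opR_mid //. exact: gen1_R.
Qed.

Lemma T1_T2 s : T1 s <-> T2 s.
Proof.
split.
- elim=> [|{}s _ [a [b [H ->]]]|{}s _ [a [b [H ->]]]].
  + by exists [:: 2], [:: 2]; split=> //; constructor.
  + have [Ha Hb] := genAB_ne H.
    exists (incr_head a), (2 :: b); split; [exact: genAB_H1 | exact: opL_two].
  + have [Ha Hb] := genAB_ne H.
    exists (2 :: a), (incr_head b); split; [exact: genAB_H2 | exact: opR_two].
- case=> a [b [/genAB_H H ->]]; elim: H => [|{}a {}b H IH|{}a {}b H IH].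
  + exact: gen1_start.
  + have [Ha Hb] := genH_ne H. rewrite -opL_two //. exact: gen1_L.
  + have [Ha Hb] := genH_ne H. rewrite -opR_two //. exact: gen1_R.
Qed.

Local Open Scope ring_scope.

Definition mat := (int * int * int * int)%type.
Definition mmul (x y : mat) : mat :=
  let: (a, b, c, d) := x in let: (e, f, g, h) := y in
  (a * e + b * g, a * f + b * h, c * e + d * g, c * f + d * h).
Definition mI : mat := (1, 0, 0, 1).
Definition Mc (c : nat) : mat := (c%:Z, -1, 1, 0).
Definition K (s : seq nat) : mat := foldr (fun c m => mmul (Mc c) m) mI s.
Arguments mmul : simpl never.
Lemma K_cons c t : K (c :: t) = mmul (Mc c) (K t). Proof. by []. Qed.
Definition mT : mat := (1, 1, 0, 1).
Definition mL : mat := (1, 0, -1, 1).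

Lemma mmulA x y z : mmul x (mmul y z) = mmul (mmul x y) z.
Proof.
rewrite /mmul; case: x => [[[a b] c] d]; case: y => [[[e f] g] h]; case: z => [[[i j] k] l] /=.
congr (_, _, _, _); ring.
Qed.
Lemma mmul1 x : mmul x mI = x.
Proof. rewrite /mmul; case: x => [[[a b] c] d] /=; congr (_, _, _, _); ring. Qed.

Lemma K_rcons s c : K (rcons s c) = mmul (K s) (Mc c).
Proof. elim: s => [|x s IH] /=; first by rewrite /mI /mmul /=; case: (Mc c) => [[[a b] e] d]; congr (_,_,_,_); ring.
by rewrite /= IH mmulA. Qed.

Lemma K_incr_head s : s != [::] -> K (incr_head s) = mmul mT (K s).
Proof.
case: s => [|x s] // _. rewrite /= mmulA; congr mmul.
rewrite /Mc /mT /mmul /=; congr (_,_,_,_); rewrite ?PoszD; ring.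
Qed.

Lemma incr_last_rcons0 s x : incr_last (rcons s x) = rcons s x.+1.
Proof. by rewrite /incr_last rev_rcons /= rev_cons revK. Qed.

Lemma K_incr_last s : s != [::] -> K (incr_last s) = mmul (K s) mL.
Proof.
case/lastP: s => [|s x] //= _. rewrite incr_last_rcons0 !K_rcons -mmulA; congr mmul.
rewrite /Mc /mL /mmul /=; congr (_,_,_,_); rewrite ?PoszD; ring.
Qed.

Definition W (p q : int) : mat :=
  (p ^+ 2, - (p * (p - q) - 1), p * q - 1, - (q * (p - q) - 1)).
Definition V (p q : int) : mat :=
  (p ^+ 2, - (p * (p - q) + 1), p * q + 1, - (q * (p - q) + 1)).

Lemma W_L p q : mmul mT (mmul (W p q) (Mc 2)) = W (p + q) q.
Proof. rewrite /mmul /= /W; congr (_,_,_,_); ring. Qed.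
Lemma W_R p q : mmul (Mc 2) (mmul (W p q) mL) = W (2 * p - q) p.
Proof. rewrite /mmul /= /W; congr (_,_,_,_); ring. Qed.
Lemma V_L p q : mmul mT (mmul (V p q) (Mc 2)) = V (p + q) q.
Proof. rewrite /mmul /= /V; congr (_,_,_,_); ring. Qed.
Lemma V_R p q : mmul (Mc 2) (mmul (V p q) mL) = V (2 * p - q) p.
Proof. rewrite /mmul /= /V; congr (_,_,_,_); ring. Qed.

Definition al (m : mat) := m.1.1.1.
Definition ga (m : mat) := m.1.2.

Lemma K_cons_comp c m : al (mmul (Mc c) m) = c%:Z * al m - ga m /\ ga (mmul (Mc c) m) = al m.
Proof.
rewrite /al /ga /mmul /Mc; case: m => [[[a b] e] d] /=; split; ring.
Qed.

Lemma K_hj s : all (fun c => 2 <= c)%N s ->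
  0 <= ga (K s) < al (K s) /\ (s != [::] -> hj s = (al (K s))%:~R / (ga (K s))%:~R).
Proof.
elim: s => [|c t IH] /=; first by rewrite /al /ga /=.
case/andP=> Hc Ht; have [/andP[H0 H1] H2] := IH Ht.
have [Ea Eg] := K_cons_comp c (K t); rewrite Ea Eg.
have Hc' : 2 <= c%:Z by rewrite lez_nat.
have Hnil : t = [::] -> al (K t) = 1 /\ ga (K t) = 0 by move->.
move: H2 Hnil; rewrite -/(hj t).
move: (al (K t)) (ga (K t)) H0 H1 => A G H0 H1 H2 Hnil.
clear IH Ea Eg.
have Hm : 2 * A <= c%:Z * A by rewrite ler_wpM2r //; lia.
split; first by apply/andP; split; lia.
have Ec : ((c%:Z)%:~R : rat) = c%:R by [].
move=> _; case: t Ht H2 Hnil => [|x t] Ht H2 Hnil.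
  by have [-> ->] := Hnil erefl; rewrite mulr1 subr0 divr1.
rewrite H2 // invf_div rmorphB rmorphM /= Ec.
have HA : (A%:~R : rat) != 0 by rewrite intr_eq0; lia.
by field.
Qed.

Lemma hj_gt1 s : s != [::] -> all (fun c => 2 <= c)%N s -> 1 < hj s.
Proof.
elim: s => [|c t IH] //= _ /andP[Hc Ht].
have Hc' : 2%:R <= c%:R :> rat by rewrite ler_nat.
case: t IH Ht => [|x t] IH Ht; first by lra.
have H := IH isT Ht.
have Hi : (hj (x :: t))^-1 < 1 by rewrite invf_lt1 //; lra.
lra.
Qed.

Lemma hj_bounds c t : t != [::] -> all (fun c => 2 <= c)%N t ->
  c%:R - 1 < hj (c :: t) < c%:R.
Proof.
move=> Ht Ha; have H := hj_gt1 Ht Ha.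
case: t Ht Ha H => [|x t] // _ Ha H /=.
have Hi : (hj (x :: t))^-1 < 1 by rewrite invf_lt1 //; lra.
have Hp : 0 < (hj (x :: t))^-1 by rewrite invr_gt0; lra.
apply/andP; split; lra.
Qed.

Lemma bounds_nat (c d : nat) : d%:R - 1 < c%:R :> rat -> c%:R < d%:R :> rat -> False.
Proof.
move=> H1 H2.
have : (d < c.+1)%N by rewrite -(ltr_nat rat) -natr1; lra.
have : (c < d)%N by rewrite -(ltr_nat rat).
lia.
Qed.

Lemma hj_inj s t : hj_string s -> hj_string t -> hj s = hj t -> s = t.
Proof.
elim: s t => [|c s IH] [|d t] //; rewrite /hj_string /= => /andP[Hc Hs] /andP[Hd Ht].
case: s IH Hs => [|x s] IH Hs; case: t Ht => [|y t] Ht.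
- by move/eqP; rewrite eqr_nat => /eqP ->.
- move=> E; have /andP[H1 H2] := @hj_bounds d (y :: t) isT Ht.
  by move: H1 H2; rewrite /= -E => H1 H2; case: (bounds_nat H1 H2).
- move=> E; have /andP[H1 H2] := @hj_bounds c (x :: s) isT Hs.
  by move: H1 H2; rewrite /= E => H1 H2; case: (bounds_nat H1 H2).
- move=> E; have /andP[H1 H2] := @hj_bounds c (x :: s) isT Hs.
  have /andP[H3 H4] := @hj_bounds d (y :: t) isT Ht.
  move: H1 H2 H3 H4; rewrite /= E => H1 H2 H3 H4.
  have Ecd : c = d.
    apply/eqP; rewrite eqn_leq; apply/andP; split.
      rewrite leqNgt; apply/negP => Hlt.
      have : (d.+1 <= c)%N by []. rewrite -(ler_nat rat) -natr1 => ?. lra.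
    rewrite leqNgt; apply/negP => Hlt.
    have : (c.+1 <= d)%N by []. rewrite -(ler_nat rat) -natr1 => ?. lra.
  subst d; congr (_ :: _); apply: IH; rewrite /hj_string ?Hs ?Ht //.
  move: E => /= /eqP; rewrite (inj_eq (addrI _)) => /eqP /oppr_inj.
  by move/invr_inj.
Qed.

Definition Winv (mk : int -> int -> mat) (s : seq nat) :=
  hj_string s /\ exists p q : nat, [/\ (0 < q)%N, (q < p)%N, coprime p q & K s = mk p q].

Lemma all_incr_head s : all (fun c => 2 <= c)%N s -> all (fun c => 2 <= c)%N (incr_head s).
Proof. by case: s => //= x s /andP[H ->]; rewrite andbT ltnW. Qed.

Lemma all_incr_last s : all (fun c => 2 <= c)%N s -> all (fun c => 2 <= c)%N (incr_last s).
Proof. by rewrite /incr_last all_rev => H; apply: all_incr_head; rewrite all_rev. Qed.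

Lemma coprime_subl p q : (q <= p)%N -> coprime (p - q) q = coprime p q.
Proof.
move=> H; rewrite /coprime [gcdn (p - q) q]gcdnC [gcdn p q]gcdnC.
have -> : gcdn q p = gcdn q ((p - q) + q) by rewrite subnK.
by rewrite gcdnDr.
Qed.

Lemma gcdn_subr q r : (r <= q)%N -> gcdn (q - r) q = gcdn r q.
Proof.
move=> H.
have -> : gcdn (q - r) q = gcdn (q - r) ((q - r) + r) by rewrite subnK.
rewrite gcdnDl gcdnC.
have -> : gcdn r q = gcdn r ((q - r) + r) by rewrite subnK.
by rewrite gcdnDr.
Qed.

Lemma K_opL s : s != [::] -> K (opL s) = mmul mT (mmul (K s) (Mc 2)).
Proof. by move=> H; rewrite /opL K_rcons K_incr_head // mmulA. Qed.
Lemma K_opR s : s != [::] -> K (opR s) = mmul (Mc 2) (mmul (K s) mL).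
Proof. by move=> H; rewrite /opR K_cons K_incr_last. Qed.

Section Gen.
Variable mk : int -> int -> mat.
Hypothesis HL : forall p q, mmul mT (mmul (mk p q) (Mc 2)) = mk (p + q) q.
Hypothesis HR : forall p q, mmul (Mc 2) (mmul (mk p q) mL) = mk (2 * p - q) p.

Ltac slia := repeat match goal with H : ?T |- _ =>
  lazymatch type of T with Prop =>
    lazymatch T with
    | is_true (leq _ _) => fail
    | (_ = _ :> nat) => fail
    | (_ = _ :> int) => fail
    | _ => clear H end end end; lia.

Lemma gen_inv s0 : Winv mk s0 -> forall s, gen1 s0 s -> Winv mk s.
Proof.
move=> H0 s; elim=> // {}s _ [/andP[Hn Ha] [p [q [Hq Hqp Hc E]]]]; split.
- by rewrite /hj_string /opL rcons_nilF all_rcons /= all_incr_head.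
- exists (p + q)%N, q; split; [by slia | by slia | |].
    by rewrite /coprime gcdnC gcdnDr gcdnC.
  by rewrite K_opL // E HL PoszD.
- by rewrite /hj_string /opR /= all_incr_last.
- exists (2 * p - q)%N, p; split; [by slia | by slia | |].
    have -> : (2 * p - q = (p - q) + p)%N by slia.
    rewrite /coprime gcdnC gcdnDr gcdnC gcdn_subr; [by rewrite gcdnC | exact: ltnW].
  rewrite K_opR // E HR; congr mk.
  slia.
Qed.

Lemma exist_gen s0 : s0 != [::] -> K s0 = mk 2 1 ->
  forall n p q, (p <= n)%N -> (0 < q)%N -> (q < p)%N -> coprime p q ->
  exists t, [/\ gen1 s0 t, t != [::] & K t = mk p q].
Proof.
move=> Hs0 Ks0; elim=> [|n IH] p q Hpn Hq Hqp Hc; first by slia.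
case: (ltngtP (2 * q) p) => Hcmp.
- have [||||t [Ht Htn Kt]] := IH (p - q)%N q; [by slia | by slia | by slia | | ].
    by rewrite coprime_subl ?(ltnW Hqp).
  exists (opL t); split; [exact: gen1_L | by rewrite /opL rcons_nilF |].
  by rewrite K_opL // Kt HL -PoszD subnK ?(ltnW Hqp).
- have [||||t [Ht Htn Kt]] := IH q (2 * q - p)%N; [by slia | by slia | by slia | | ].
    have -> : (2 * q - p = q - (p - q))%N by slia.
    rewrite /coprime gcdnC gcdn_subr; last by slia.
    by rewrite -/(coprime _ _) coprime_subl ?(ltnW Hqp).
  exists (opR t); split; [exact: gen1_R | by [] |].
  rewrite K_opR // Kt HR; congr mk.
  slia.
- have q1 : q = 1%N.
    move: Hc; rewrite -Hcmp /coprime gcdnC.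
    have -> : (2 * q = q + q)%N by slia.
    by rewrite gcdnDl gcdnn => /eqP.
  have p2 : p = 2%N by slia.
  by subst; exists s0; split => //; exact: gen1_start.
Qed.
End Gen.

Lemma K4 : K [:: 4%N] = W 2 1.
Proof. by rewrite /K /= /mmul /W /Mc /mI /=. Qed.
Lemma K222 : K [:: 2; 2; 2]%N = V 2 1.
Proof. by rewrite /K /= /mmul /V /Mc /mI /=. Qed.

Lemma Winv4 : Winv W [:: 4%N].
Proof. by split => //; exists 2%N, 1%N; split => //; rewrite K4. Qed.
Lemma Winv222 : Winv V [:: 2; 2; 2]%N.
Proof. by split => //; exists 2%N, 1%N; split => //; rewrite K222. Qed.

Lemma W_hj s (p q : nat) : hj_string s -> K s = W p q ->
  hj s = (p ^ 2)%:R / ((p * q)%:R - 1).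
Proof.
case/andP=> Hn Ha E; have [_ H] := K_hj Ha; rewrite H // E /al /ga /W /=.
by rewrite rmorphXn rmorphB rmorphM /= natrX natrM.
Qed.
Lemma V_hj s (p q : nat) : hj_string s -> K s = V p q ->
  hj s = (p ^ 2)%:R / ((p * q)%:R + 1).
Proof.
case/andP=> Hn Ha E; have [_ H] := K_hj Ha; rewrite H // E /al /ga /V /=.
by rewrite rmorphXn rmorphD rmorphM /= natrX natrM.
Qed.

Lemma S1_HJ s : S1 s <-> HJminus s.
Proof.
split.
- move=> H; have [Hs [p [q [Hq Hqp Hc E]]]] := gen_inv W_L W_R Winv4 H.
  split => //; exists p, q; split => //; exact: W_hj.
- case=> Hs [p [q [Hq Hqp Hc E]]].
  have [t [Ht Htn Kt]] := exist_gen W_L W_R (s0 := [:: 4%N]) isT K4 (leqnn p) Hq Hqp Hc.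
  have [Ht' _] := gen_inv W_L W_R Winv4 Ht.
  suff -> : s = t by [].
  by apply: hj_inj => //; rewrite E (W_hj Ht' Kt).
Qed.

Lemma T1_HJ s : T1 s <-> HJplus s.
Proof.
split.
- move=> H; have [Hs [p [q [Hq Hqp Hc E]]]] := gen_inv V_L V_R Winv222 H.
  split => //; exists p, q; split => //; exact: V_hj.
- case=> Hs [p [q [Hq Hqp Hc E]]].
  have [t [Ht Htn Kt]] := exist_gen V_L V_R (s0 := [:: 2; 2; 2]%N) isT K222 (leqnn p) Hq Hqp Hc.
  have [Ht' _] := gen_inv V_L V_R Winv222 Ht.
  suff -> : s = t by [].
  by apply: hj_inj => //; rewrite E (V_hj Ht' Kt).
Qed.

Local Close Scope ring_scope.

Theorem lemma3p3 :
  (forall s : seq nat, S1 s <-> S2 s) /\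
  (forall s : seq nat, S1 s <-> HJminus s) /\
  (forall s : seq nat, T1 s <-> HJplus s) /\
  (forall s : seq nat, T2 s <-> HJplus s).
Proof.
split; first exact: S1_S2.
split; first exact: S1_HJ.
split; first exact: T1_HJ.
by move=> s; rewrite -T1_T2 T1_HJ.
Qed.
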